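(* For every set of formulas $\Gamma$ and formula $\varphi$: $\Gamma\vdash_{\mathsf{NeL}^{\mathrm{ECQ}}}\varphi$ iff $\Gamma\models_{\mathfrak{N}_w^{S}}\varphi$, where $\mathsf{NeL}^{\mathrm{ECQ}}$ is $\mathsf{NeL}$ extended by the rule scheme (ECQ) $\varphi,\varphi^{*}\vdash\psi$, and $\mathfrak{N}_w^{S}$ is the class of $\mathfrak{N}_w$-models $(\mathbf A,\perp,\{\mathsf{t},\mathsf{f}\})$ such that for all $x,z\in A$, $x\perp\mathsf{t}$ and $x\perp\mathsf{f}$ imply $z\perp\mathsf{f}$.
   Context: Formulas are built from a countably infinite set of variables using binary $\otimes,\circ$ and unary ${}^{*}$; $\mathbf{Fm}$ is the formula algebra. Abbreviations (also term operations): $\varphi\Rightarrow\psi:=(\varphi\circ\psi^{*})^{*}$; $\varphi\Leftrightarrow\psi:=(\varphi\Rightarrow\psi)\otimes(\psi\Rightarrow\varphi)$; $\varphi\not\Leftrightarrow\psi:=(\varphi\Leftrightarrow\psi)^{*}$; $\varphi\not\Leftrightarrow\psi\not\Leftrightarrow\chi:=((\varphi\not\Leftrightarrow\psi)\otimes(\varphi\not\Leftrightarrow\chi))\otimes(\psi\not\Leftrightarrow\chi)$. $\mathsf{NeL}$: axiom schemes (A1) $\varphi\Rightarrow\varphi$; (A2) $(\varphi\circ\psi)\Rightarrow(\psi\circ\varphi)$; (A3) $\varphi\Rightarrow\varphi^{**}$; (A4) $(\varphi\Rightarrow\psi)\Rightarrow(\varphi\circ\psi)$; (A5) $(\varphi\otimes\psi)\Leftrightarrow(\psi\otimes\varphi)$;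 (A6) $((\varphi\otimes\psi)\Rightarrow\chi)\Rightarrow((\varphi\otimes\chi^{*})\Rightarrow\psi^{*})$; (A7) $(\varphi\not\Leftrightarrow\psi\not\Leftrightarrow\chi)\Rightarrow((\varphi\Rightarrow\psi)\Rightarrow((\psi\Rightarrow\chi)\Rightarrow(\varphi\Rightarrow\chi)))$; rules on arbitrary formulas: $\varphi\Rightarrow\psi,\varphi/\psi$; $\varphi,\psi/\varphi\otimes\psi$; $\varphi\Leftrightarrow\psi,\chi/\chi'$ ($\chi'$ from $\chi$ replacing one or more occurrences of $\varphi$ by $\psi$); $\varphi\otimes\psi/\varphi$. A weak $\mathcal{N}$-algebra is an algebra $(A,\otimes,\circ,{}^{*})$ of type $(2,2,1)$ with $\otimes,\circ$ commutative, $x^{**}=x$, $(x\otimes y)\circ z=(x\otimes z)\circ y$. With $\mathsf{t}\ne\mathsf{f}$ symbols not in $A$, $\overline A=A\cup\{\mathsf{t},\mathsf{f}\}$, an $\mathfrak{N}_w$-model is $(\mathbf A,\perp,\{\mathsf{t},\mathsf{f}\})$, $\mathbf A$ a weak $\mathcal{N}$-algebra, $\perp\subseteq\overline A\times\overline A$, such that for all $x,y,z\in A$: (a) $x\perp x^{*}$; (b) $x\perp y^{*}$ and $y\perp x^{*}$ imply $x=y$; (c) $x\perp y$ iff $x\circ y\perp\mathsf{t}$; (d) $x\perp\mathsf{t}$ iff $x^{*}\perp\mathsf{f}$; (e) $x\perp\mathsf{f}$ and $y\perp\mathsf{f}$ iff $x\otimes y\perp\mathsf{f}$; (f) $(x\circ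 y^{*})^{*}\perp(x\circ y)^{*}$; (g) $x\perp y$ and $x\perp\mathsf{f}$ imply $y\perp\mathsf{t}$; (h) $(x\not\Leftrightarrow y\not\Leftrightarrow z)\perp((x\Rightarrow y)\Rightarrow((y\Rightarrow z)\Rightarrow(x\Rightarrow z)))^{*}$. $F_\perp=\{a\in A:a\perp\mathsf{f}\}$. For a class $K$ of such models, $\Gamma\models_K\varphi$ iff there is a finite $\Gamma'\subseteq\Gamma$ such that for every model in $K$ and every homomorphism $h:\mathbf{Fm}\to\mathbf A$, $h(\Gamma')\subseteq F_\perp$ implies $h(\varphi)\in F_\perp$. *)

(* Defs.v *)
From Stdlib Require Import List.
Import ListNotations.

(** * Formulas: variables (nat), binary ⊗ (Ot), binary ∘ (Oc), unary * (St). *)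
Inductive fm : Type :=
| Var : nat -> fm
| Ot : fm -> fm -> fm
| Oc : fm -> fm -> fm
| St : fm -> fm.

Definition Imp (a b : fm) : fm := St (Oc a (St b)).
Definition Iff (a b : fm) : fm := Ot (Imp a b) (Imp b a).
Definition NIff (a b : fm) : fm := St (Iff a b).
Definition NIff3 (a b c : fm) : fm :=
  Ot (Ot (NIff a b) (NIff a c)) (NIff b c).

(** [rep a b c c' one]: c' is obtained from c by replacing some occurrences
    of a by b; [one = true] iff at least one occurrence was replaced. *)
Inductive rep (a b : fm) : fm -> fm -> bool -> Prop :=
| rep_here : rep a b a b true
| rep_var : forall n, rep a b (Var n) (Var n) false
| rep_ot : forall l l' r r' f1 f2,
    rep a b l l' f1 -> rep a b r r' f2 -> rep a b (Ot l r) (Ot l' r') (orb f1 f2)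
| rep_oc : forall l l' r r' f1 f2,
    rep a b l l' f1 -> rep a b r r' f2 -> rep a b (Oc l r) (Oc l' r') (orb f1 f2)
| rep_st : forall l l' f1,
    rep a b l l' f1 -> rep a b (St l) (St l') f1.

Inductive axiomNeL : fm -> Prop :=
| A1 : forall p, axiomNeL (Imp p p)
| A2 : forall p q, axiomNeL (Imp (Oc p q) (Oc q p))
| A3 : forall p, axiomNeL (Imp p (St (St p)))
| A4 : forall p q, axiomNeL (Imp (Imp p q) (Oc p q))
| A5 : forall p q, axiomNeL (Iff (Ot p q) (Ot q p))
| A6 : forall p q c,
    axiomNeL (Imp (Imp (Ot p q) c) (Imp (Ot p (St c)) (St q)))
| A7 : forall p q c,
    axiomNeL (Imp (NIff3 p q c)
                  (Imp (Imp p q) (Imp (Imp q c) (Imp p c)))).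

Inductive derivable (Gamma : fm -> Prop) : fm -> Prop :=
| d_hyp : forall p, Gamma p -> derivable Gamma p
| d_ax : forall p, axiomNeL p -> derivable Gamma p
| d_mp : forall p q,
    derivable Gamma (Imp p q) -> derivable Gamma p -> derivable Gamma q
| d_adj : forall p q,
    derivable Gamma p -> derivable Gamma q -> derivable Gamma (Ot p q)
| d_repl : forall p q c c',
    derivable Gamma (Iff p q) -> derivable Gamma c ->
    rep p q c c' true -> derivable Gamma c'
| d_simp : forall p q, derivable Gamma (Ot p q) -> derivable Gamma p
| d_ecq : forall p q,
    derivable Gamma p -> derivable Gamma (St p) -> derivable Gamma q.

Record alg : Type := {
  carrier :> Type;
  aot : carrier -> carrier -> carrier;
  aoc : carrier -> carrier -> carrier;
  ast : carrier -> carrier }.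

Definition aimp (A : alg) (x y : A) : A := ast A (aoc A x (ast A y)).
Definition aiff (A : alg) (x y : A) : A := aot A (aimp A x y) (aimp A y x).
Definition aniff (A : alg) (x y : A) : A := ast A (aiff A x y).
Definition aniff3 (A : alg) (x y z : A) : A :=
  aot A (aot A (aniff A x y) (aniff A x z)) (aniff A y z).

Definition weak_N_algebra (A : alg) : Prop :=
  (forall x y : A, aot A x y = aot A y x) /\
  (forall x y : A, aoc A x y = aoc A y x) /\
  (forall x : A, ast A (ast A x) = x) /\
  (forall x y z : A, aoc A (aot A x y) z = aoc A (aot A x z) y).

Inductive ext (A : Type) : Type :=
| El : A -> ext A
| Tt : ext A
| Ff : ext A.
Arguments El {A} _.
Arguments Tt {A}.
Arguments Ff {A}.

Definition Nw_model (A : alg) (perp : ext A -> ext A -> Prop) : Prop :=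
  weak_N_algebra A /\
  (forall x : A, perp (El x) (El (ast A x))) /\                            (* a *)
  (forall x y : A, perp (El x) (El (ast A y)) -> perp (El y) (El (ast A x)) ->
                   x = y) /\                                              (* b *)
  (forall x y : A, perp (El x) (El y) <-> perp (El (aoc A x y)) Tt) /\     (* c *)
  (forall x : A, perp (El x) Tt <-> perp (El (ast A x)) Ff) /\             (* d *)
  (forall x y : A, (perp (El x) Ff /\ perp (El y) Ff) <->
                   perp (El (aot A x y)) Ff) /\                           (* e *)
  (forall x y : A, perp (El (ast A (aoc A x (ast A y))))
                        (El (ast A (aoc A x y)))) /\                      (* f *)
  (forall x y : A, perp (El x) (El y) -> perp (El x) Ff ->
                   perp (El y) Tt) /\                                     (* g *)
  (forall x y z : A,
      perp (El (aniff3 A x y z))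
           (El (ast A (aimp A (aimp A x y)
                         (aimp A (aimp A y z) (aimp A x z)))))).          (* h *)

Definition S_condition (A : alg) (perp : ext A -> ext A -> Prop) : Prop :=
  forall x z : A, perp (El x) Tt -> perp (El x) Ff -> perp (El z) Ff.

Definition F_perp (A : alg) (perp : ext A -> ext A -> Prop) (a : A) : Prop :=
  perp (El a) Ff.

Definition is_hom (A : alg) (h : fm -> A) : Prop :=
  (forall p q, h (Ot p q) = aot A (h p) (h q)) /\
  (forall p q, h (Oc p q) = aoc A (h p) (h q)) /\
  (forall p, h (St p) = ast A (h p)).

Definition models_NwS (Gamma : fm -> Prop) (phi : fm) : Prop :=
  exists Gamma' : list fm,
    (forall g, In g Gamma' -> Gamma g) /\
    forall (A : alg) (perp : ext A -> ext A -> Prop),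
      Nw_model A perp -> S_condition A perp ->
      forall h : fm -> A, is_hom A h ->
        (forall g, In g Gamma' -> F_perp A perp (h g)) ->
        F_perp A perp (h phi).

(* Main.v *)
Require Import Defs.
From Stdlib Require Import List IndefiniteDescription FunctionalExtensionality PropExtensionality ProofIrrelevance.
Import ListNotations.

Lemma rep_refl a b c : rep a b c c false.
Proof.
  induction c.
  - apply rep_var.
  - exact (rep_ot a b _ _ _ _ false false IHc1 IHc2).
  - exact (rep_oc a b _ _ _ _ false false IHc1 IHc2).
  - exact (rep_st a b _ _ _ IHc).
Qed.

Lemma rep_ot_b a b l l' r r' : rep a b l l' true -> rep a b r r' true -> rep a b (Ot l r) (Ot l' r') true.
Proof. intros H1 H2. exact (rep_ot a b _ _ _ _ true true H1 H2). Qed.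
Lemma rep_ot_l a b l l' r : rep a b l l' true -> rep a b (Ot l r) (Ot l' r) true.
Proof. intros H1. exact (rep_ot a b _ _ _ _ true false H1 (rep_refl a b r)). Qed.
Lemma rep_ot_r a b l r r' : rep a b r r' true -> rep a b (Ot l r) (Ot l r') true.
Proof. intros H1. exact (rep_ot a b _ _ _ _ false true (rep_refl a b l) H1). Qed.
Lemma rep_oc_b a b l l' r r' : rep a b l l' true -> rep a b r r' true -> rep a b (Oc l r) (Oc l' r') true.
Proof. intros H1 H2. exact (rep_oc a b _ _ _ _ true true H1 H2). Qed.
Lemma rep_oc_l a b l l' r : rep a b l l' true -> rep a b (Oc l r) (Oc l' r) true.
Proof. intros H1. exact (rep_oc a b _ _ _ _ true false H1 (rep_refl a b r)). Qed.
Lemma rep_oc_r a b l r r' : rep a b r r' true -> rep a b (Oc l r) (Oc l r') true.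
Proof. intros H1. exact (rep_oc a b _ _ _ _ false true (rep_refl a b l) H1). Qed.

Ltac rp := match goal with
| |- rep ?a ?b ?a ?b true => apply rep_here
| |- rep _ _ (Ot _ _) (Ot _ _) true =>
    first [ apply rep_ot_b; rp | apply rep_ot_l; rp | apply rep_ot_r; rp ]
| |- rep _ _ (Oc _ _) (Oc _ _) true =>
    first [ apply rep_oc_b; rp | apply rep_oc_l; rp | apply rep_oc_r; rp ]
| |- rep _ _ (St _) (St _) true => apply rep_st; rp
end.

Ltac replw H E := apply (d_repl _ _ _ _ _ H E); cbv [Imp Iff NIff NIff3]; rp.

Lemma iff_refl G p : derivable G (Iff p p).
Proof. apply d_adj; apply d_ax; apply A1. Qed.

Lemma D_iff G a b : derivable G (Iff a b) -> derivable G a -> derivable G b.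
Proof. intros H E. exact (d_repl G a b a b H E (rep_here a b)). Qed.

Lemma iff_sym G p q : derivable G (Iff p q) -> derivable G (Iff q p).
Proof.
  intros H.
  apply (d_repl G (Ot (Imp p q) (Imp q p)) (Ot (Imp q p) (Imp p q)) (Iff p q) (Iff q p)).
  - apply d_ax; apply A5.
  - exact H.
  - exact (rep_here _ _).
Qed.

Lemma iff_r G r s A B B' : derivable G (Iff r s) -> rep r s B B' true ->
  derivable G (Iff A B) -> derivable G (Iff A B').
Proof.
  intros H1 H2 H3. apply (d_repl G r s (Iff A B) (Iff A B') H1 H3).
  unfold Iff, Imp. apply rep_ot_b; apply rep_st.
  - apply rep_oc_r, rep_st, H2.
  - apply rep_oc_l, H2.
Qed.

Lemma iff_trans G p q r : derivable G (Iff p q) -> derivable G (Iff q r) -> derivable G (Iff p r).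
Proof. intros H1 H2. exact (iff_r G q r p q r H2 (rep_here q r) H1). Qed.

Lemma iff_of_rep G p q X Y : derivable G (Iff p q) -> rep p q X Y true -> derivable G (Iff X Y).
Proof. intros H1 H2. exact (iff_r G p q X X Y H1 H2 (iff_refl G X)). Qed.

Lemma cong_st G p q : derivable G (Iff p q) -> derivable G (Iff (St p) (St q)).
Proof. intros H. apply (iff_of_rep G p q); [exact H| apply rep_st, rep_here]. Qed.
Lemma cong_ot G p p' q q' : derivable G (Iff p p') -> derivable G (Iff q q') -> derivable G (Iff (Ot p q) (Ot p' q')).
Proof. intros H1 H2. apply iff_trans with (Ot p' q).
  - apply (iff_of_rep G p p'); [exact H1| apply rep_ot_l, rep_here].
  - apply (iff_of_rep G q q'); [exact H2| apply rep_ot_r, rep_here].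
Qed.
Lemma cong_oc G p p' q q' : derivable G (Iff p p') -> derivable G (Iff q q') -> derivable G (Iff (Oc p q) (Oc p' q')).
Proof. intros H1 H2. apply iff_trans with (Oc p' q).
  - apply (iff_of_rep G p p'); [exact H1| apply rep_oc_l, rep_here].
  - apply (iff_of_rep G q q'); [exact H2| apply rep_oc_r, rep_here].
Qed.

Lemma comm_oc G p q : derivable G (Iff (Oc p q) (Oc q p)).
Proof. apply d_adj; apply d_ax; apply A2. Qed.

Lemma dn_r G p : derivable G (Imp (St (St p)) p).
Proof.
  pose proof (d_ax G _ (A1 (St p))) as h1.
  replw (comm_oc G (St p) (St (St p))) h1.
Qed.

Lemma dn G p : derivable G (Iff p (St (St p))).
Proof. apply d_adj; [apply d_ax, A3 | apply dn_r]. Qed.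

Lemma contra G X Y : derivable G (Imp (St X) (St Y)) -> derivable G (Imp Y X).
Proof.
  intros H.
  assert (H1 : derivable G (St (Oc (St X) Y))).
  { replw (iff_sym _ _ _ (dn G Y)) H. }
  replw (comm_oc G (St X) Y) H1.
Qed.

Lemma w4 G p q c : derivable G (Imp (Oc (Ot p c) q) (Oc (Ot p q) c)).
Proof.
  pose proof (d_ax G _ (A6 p q (St c))) as H.
  apply contra in H.
  assert (H1 : derivable G (Imp (Oc (Ot p c) (St (St q))) (Oc (Ot p q) c))).
  { replw (iff_sym _ _ _ (dn G c)) H. }
  replw (iff_sym _ _ _ (dn G q)) H1.
Qed.

Lemma w4_iff G p q c : derivable G (Iff (Oc (Ot p q) c) (Oc (Ot p c) q)).
Proof. apply d_adj; apply w4. Qed.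

Lemma h_imp A h p q : is_hom A h -> h (Imp p q) = aimp A (h p) (h q).
Proof. intros [H1 [H2 H3]]. unfold Imp, aimp. rewrite H3, H2, H3. reflexivity. Qed.
Lemma h_iff A h p q : is_hom A h -> h (Iff p q) = aiff A (h p) (h q).
Proof. intros Hh. pose proof Hh as [H1 [H2 H3]]. unfold Iff, aiff. rewrite H1, !h_imp by exact Hh. reflexivity. Qed.
Lemma h_niff A h p q : is_hom A h -> h (NIff p q) = aniff A (h p) (h q).
Proof. intros Hh. pose proof Hh as [H1 [H2 H3]]. unfold NIff, aniff. rewrite H3, h_iff by exact Hh. reflexivity. Qed.
Lemma h_niff3 A h p q c : is_hom A h -> h (NIff3 p q c) = aniff3 A (h p) (h q) (h c).
Proof. intros Hh. pose proof Hh as [H1 [H2 H3]]. unfold NIff3, aniff3. rewrite !H1, !h_niff by exact Hh. reflexivity. Qed.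

Lemma F_imp A perp h p q : Nw_model A perp -> is_hom A h ->
  (F_perp A perp (h (Imp p q)) <-> perp (El (h p)) (El (ast A (h q)))).
Proof.
  intros [WA [Ha [Hb [Hc [Hd _]]]]] Hh. rewrite h_imp by exact Hh.
  unfold F_perp, aimp. rewrite <- Hd, <- Hc. tauto.
Qed.

Lemma rep_h A h p q c c' f : is_hom A h -> h p = h q -> rep p q c c' f -> h c = h c'.
Proof.
  intros [H1 [H2 H3]] E R. induction R; try reflexivity; auto.
  - rewrite !H1; congruence.
  - rewrite !H2; congruence.
  - rewrite !H3; congruence.
Qed.

Lemma sound_ax A perp h p : Nw_model A perp -> is_hom A h -> axiomNeL p -> F_perp A perp (h p).
Proof.
  intros HM Hh Hax. pose proof HM as [[Wt [Wc [Ws Ww]]] [Ha [Hb [Hc [Hd [He [Hf [Hg Hhh]]]]]]]].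
  pose proof Hh as [H1 [H2 H3]].
  destruct Hax.
  - apply (F_imp A perp h) ; auto.
  - apply (F_imp A perp h) ; auto. rewrite !H2, Wc. auto.
  - apply (F_imp A perp h) ; auto. rewrite !H3, Ws. auto.
  - apply (F_imp A perp h) ; auto. rewrite h_imp by auto. unfold aimp. rewrite H2. apply Hf.
  - unfold Iff. rewrite H1. apply He. split; apply (F_imp A perp h); auto; rewrite !H1, Wt; auto.
  - apply (F_imp A perp h) ; auto. rewrite !h_imp by auto. unfold aimp.
    rewrite !H1, !H3, !Ws, (Ww (h p) (ast A (h c)) (h q)). generalize (Ha (ast A (aoc A (aot A (h p) (h q)) (ast A (h c))))). rewrite Ws. auto.
  - apply (F_imp A perp h) ; auto. rewrite h_niff3 by auto. rewrite !h_imp by auto. apply Hhh.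
Qed.

Lemma models_comb G p q r : models_NwS G p -> models_NwS G q ->
  (forall A perp, Nw_model A perp -> S_condition A perp -> forall h, is_hom A h ->
     F_perp A perp (h p) -> F_perp A perp (h q) -> F_perp A perp (h r)) ->
  models_NwS G r.
Proof.
  intros [L1 [HL1 S1]] [L2 [HL2 S2]] K. exists (L1 ++ L2). split.
  - intros g Hg. apply in_app_or in Hg. destruct Hg; auto.
  - intros A perp HM HS h Hh HF. apply (K A perp HM HS h Hh).
    + apply S1; auto. intros g Hg. apply HF. apply in_or_app. auto.
    + apply S2; auto. intros g Hg. apply HF. apply in_or_app. auto.
Qed.

Lemma soundness G phi : derivable G phi -> models_NwS G phi.
Proof.
  induction 1.
  - exists [p]. split.
    + intros g [<-|[]]. auto.
    + intros A perp _ _ h _ HF. apply HF. left. reflexivity.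
  - exists []. split; [intros g []|]. intros A perp HM _ h Hh _. apply sound_ax; auto.
  - apply (models_comb G _ _ _ IHderivable1 IHderivable2).
    intros A perp HM HS h Hh F1 F2.
    pose proof HM as [[Wt [Wc [Ws Ww]]] [Ha [Hb [Hc [Hd [He [Hf [Hg Hhh]]]]]]]].
    apply (F_imp A perp h) in F1; auto.
    apply Hg in F1; auto. apply Hd in F1. rewrite Ws in F1. exact F1.
  - apply (models_comb G _ _ _ IHderivable1 IHderivable2).
    intros A perp HM HS h Hh F1 F2.
    pose proof HM as [[Wt [Wc [Ws Ww]]] [Ha [Hb [Hc [Hd [He [Hf [Hg Hhh]]]]]]]].
    pose proof Hh as [H1 [H2 H3]]. unfold F_perp. rewrite H1. apply He. auto.
  - apply (models_comb G _ _ _ IHderivable1 IHderivable2).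
    intros A perp HM HS h Hh F1 F2.
    pose proof HM as [[Wt [Wc [Ws Ww]]] [Ha [Hb [Hc [Hd [He [Hf [Hg Hhh]]]]]]]].
    pose proof Hh as [K1 [K2 K3]]. unfold Iff, F_perp in F1. rewrite K1 in F1.
    apply He in F1. destruct F1 as [F11 F12].
    apply (F_imp A perp h) in F11; auto. apply (F_imp A perp h) in F12; auto.
    pose proof (Hb _ _ F11 F12) as E.
    unfold F_perp. rewrite <- (rep_h A h p q c c' true Hh E H1). exact F2.
  - apply (models_comb G _ _ _ IHderivable IHderivable).
    intros A perp HM HS h Hh F1 _.
    pose proof HM as [[Wt [Wc [Ws Ww]]] [Ha [Hb [Hc [Hd [He [Hf [Hg Hhh]]]]]]]].
    pose proof Hh as [H1 [H2 H3]]. unfold F_perp in *. rewrite H1 in F1. apply He in F1. tauto.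
  - apply (models_comb G _ _ _ IHderivable1 IHderivable2).
    intros A perp HM HS h Hh F1 F2.
    pose proof HM as [[Wt [Wc [Ws Ww]]] [Ha [Hb [Hc [Hd [He [Hf [Hg Hhh]]]]]]]].
    pose proof Hh as [H1 [H2 H3]]. unfold F_perp in *. rewrite H3 in F2.
    apply Hd in F2. exact (HS _ _ F2 F1).
Qed.

Definition eqv G p q := derivable G (Iff p q).
Definition Qt G := {P : fm -> Prop | exists p, P = eqv G p}.
Definition cls G p : Qt G := exist _ (eqv G p) (ex_intro _ p eq_refl).
Definition rpr G (X : Qt G) : fm := proj1_sig (constructive_indefinite_description _ (proj2_sig X)).

Lemma sig_eq G (X Y : Qt G) : proj1_sig X = proj1_sig Y -> X = Y.
Proof. destruct X, Y; simpl; intros ->. f_equal. apply proof_irrelevance. Qed.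

Lemma cls_rpr G X : cls G (rpr G X) = X.
Proof.
  apply sig_eq. unfold rpr. destruct (constructive_indefinite_description _ _) as [p Hp].
  simpl. symmetry. exact Hp.
Qed.

Lemma cls_eq G p q : cls G p = cls G q <-> derivable G (Iff p q).
Proof.
  split.
  - intros E. apply (f_equal (@proj1_sig _ _)) in E. simpl in E.
    apply (f_equal (fun P => P q)) in E. unfold eqv in E. rewrite E. apply iff_refl.
  - intros H. apply sig_eq. simpl. apply functional_extensionality. intros r.
    apply propositional_extensionality. unfold eqv. split; intros H'.
    + eapply iff_trans; [apply iff_sym; exact H| exact H'].
    + eapply iff_trans; [exact H| exact H'].
Qed.

Lemma rpr_cls_tr G p p' : derivable G (Iff p p') -> derivable G (Iff (rpr G (cls G p)) p').
Proof.
  intros H. eapply iff_trans; [|exact H]. apply cls_eq. apply cls_rpr.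
Qed.

Ltac tq := match goal with
| |- derivable _ (Iff (rpr _ (cls _ _)) _) => apply rpr_cls_tr; tq
| |- derivable _ (Iff (St _) _) => apply cong_st; tq
| |- derivable _ (Iff (Ot _ _) _) => apply cong_ot; tq
| |- derivable _ (Iff (Oc _ _) _) => apply cong_oc; tq
| |- _ => apply iff_refl
end.

Definition canA G : alg := {|
  carrier := Qt G;
  aot := fun X Y => cls G (Ot (rpr G X) (rpr G Y));
  aoc := fun X Y => cls G (Oc (rpr G X) (rpr G Y));
  ast := fun X => cls G (St (rpr G X)) |}.

Definition canP G (u v : ext (Qt G)) : Prop :=
  match u, v with
  | El X, El Y => derivable G (St (Oc (rpr G X) (rpr G Y)))
  | El X, Tt => derivable G (St (rpr G X))
  | El X, Ff => derivable G (rpr G X)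
  | _, _ => False
  end.

Lemma tr G a b : derivable G (Iff a b) -> (derivable G a <-> derivable G b).
Proof. intros H. split; apply D_iff; auto. apply iff_sym; auto. Qed.

Ltac tr_goal f := apply (D_iff _ f); [apply iff_sym; tq | ].
Ltac tr_hyp H f := apply (D_iff _ _ f) in H; [| tq].

Lemma can_model G : Nw_model (canA G) (canP G).
Proof.
  refine (conj _ (conj _ (conj _ (conj _ (conj _ (conj _ (conj _ (conj _ _)))))))); simpl.
  - refine (conj _ (conj _ (conj _ _))); simpl.
    + intros x y. apply cls_eq. apply d_ax; apply A5.
    + intros x y. apply cls_eq. apply comm_oc.
    + intros x. rewrite <- (cls_rpr G x) at 2. apply cls_eq.
      apply iff_trans with (St (St (rpr G x))); [tq | apply iff_sym, dn].
    + intros x y z. apply cls_eq.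
      apply iff_trans with (Oc (Ot (rpr G x) (rpr G y)) (rpr G z)); [tq|].
      apply iff_trans with (Oc (Ot (rpr G x) (rpr G z)) (rpr G y)); [apply w4_iff|].
      apply iff_sym; tq.
  - intros x. tr_goal (Imp (rpr G x) (rpr G x)). apply d_ax, A1.
  - intros x y H1 H2. rewrite <- (cls_rpr G x), <- (cls_rpr G y). apply cls_eq.
    tr_hyp H1 (Imp (rpr G x) (rpr G y)). tr_hyp H2 (Imp (rpr G y) (rpr G x)).
    apply d_adj; auto.
  - intros x y. apply tr. apply iff_sym. tq.
  - intros x. apply tr. apply iff_sym. tq.
  - intros x y. split.
    + intros [H1 H2]. tr_goal (Ot (rpr G x) (rpr G y)). apply d_adj; auto.
    + intros H. tr_hyp H (Ot (rpr G x) (rpr G y)). split.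
      * eapply d_simp; exact H.
      * apply (d_simp _ _ (rpr G x)). apply (D_iff _ (Ot (rpr G x) (rpr G y))); [apply d_ax, A5 | exact H].
  - intros x y. tr_goal (Imp (Imp (rpr G x) (rpr G y)) (Oc (rpr G x) (rpr G y))). apply d_ax, A4.
  - intros x y H1 H2. assert (H3 : derivable G (Imp (rpr G x) (St (rpr G y)))).
    { replw (dn G (rpr G y)) H1. }
    eapply d_mp; eauto.
  - intros x y z. set (x' := rpr G x). set (y' := rpr G y). set (z' := rpr G z).
    tr_goal (Imp (NIff3 x' y' z') (Imp (Imp x' y') (Imp (Imp y' z') (Imp x' z')))).
    apply d_ax, A7.
Qed.

Lemma cls_hom G : is_hom (canA G) (cls G).
Proof.
  refine (conj _ (conj _ _)); intros; simpl; apply cls_eq; apply iff_sym; tq.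
Qed.

Lemma completeness G phi : models_NwS G phi -> derivable G phi.
Proof.
  intros [L [HL S]].
  pose proof (S (canA G) (canP G) (can_model G)) as S'.
  assert (HS : S_condition (canA G) (canP G)).
  { intros x z H1 H2. simpl in *. eapply d_ecq; eauto. }
  specialize (S' HS (cls G) (cls_hom G)).
  unfold F_perp in S'. simpl in S'.
  assert (E : forall p, derivable G (rpr G (cls G p)) <-> derivable G p).
  { intros p. apply tr. tq. }
  apply E. apply S'. intros g Hg. apply E. apply d_hyp. auto.
Qed.

Theorem theorem5p7 : forall (Gamma : fm -> Prop) (phi : fm),
  derivable Gamma phi <-> models_NwS Gamma phi.
Proof.
  intros G phi. split; [apply soundness | apply completeness].
Qed.
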